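(* Fix $0<p<1$ and real numbers $L<U$ (not necessarily integers, and without requiring $U-L\ge 4$). With the notation of the context, for every real $x\in[L,U]$ there exist $\alpha(x),\beta(x)\in[0,1]$ with $\alpha(x)=\lim_{k\to\infty}\alpha_k(x)$ and $\beta(x)=\lim_{k\to\infty}\beta_k(x)$, and moreover $\alpha(x)+\beta(x)=1$.
   Context: Let $\xi_1,\xi_2,\dots$ be i.i.d. random variables with values in $\{1,-1\}$, $\mathbb{P}(\xi_i=1)=p$, $\mathbb{P}(\xi_i=-1)=q:=1-p$. Define $X_k=-1$ if $\xi_k=-1$; $X_k=2$ if $\xi_k=\xi_{k-1}=1$ (for $k\ge 2$); and $X_k=1$ otherwise (in particular $X_1=1$ when $\xi_1=1$). Let $S_0=0$, $S_k=X_1+\dots+X_k$, and $S^x_k=x+S_k$. For $k\ge 0$ let $\tau^x_k=\min\{l\in\{0,\dots,k\}: S^x_l\le L \text{ or } S^x_l\ge U\}$ if this set is nonempty, and $\tau^x_k=k$ otherwise. Let $\alpha_k(x)=\mathbb{P}\big(\bigcup_{l=0}^k\{\tau^x_k=l,\ S^x_l\le L\}\big)$ and $\beta_k(x)=\mathbb{P}\big(\bigcup_{l=0}^k\{\tau^x_k=l,\ S^x_l\ge U\}\big)$. *)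

(* Defs.v *)
From HB Require Import structures.
From mathcomp Require Import all_boot all_order all_algebra.
From mathcomp Require Import all_classical all_reals topology normedtype sequences.
Set Implicit Arguments. Unset Strict Implicit. Unset Printing Implicit Defensive.
Import Order.TTheory GRing.Theory Num.Theory.
Local Open Scope ring_scope.

Section Walk.
Variable R : realType.

(* A sample path: [s (k-1) = true] encodes xi_k = 1, [false] encodes xi_k = -1
   (indices shifted so that xi_1 is s 0). *)

Definition Xstep (s : nat -> bool) (k : nat) : R :=
  if ~~ s k.-1 then -1
  else if (1 < k)%N && s k.-2 then 2 else 1.

Definition Spart (s : nat -> bool) (k : nat) : R :=
  \sum_(1 <= i < k.+1) Xstep s i.

Definition exited (L U x : R) (s : nat -> bool) (l : nat) : bool :=
  (x + Spart s l <= L) || (U <= x + Spart s l).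

(* tau^x_k : the least l in {0..k} with S^x_l <= L or S^x_l >= U, and k if none *)
Definition tau (L U x : R) (s : nat -> bool) (k : nat) : nat :=
  minn (find (exited L U x s) (iota 0 k.+1)) k.

Definition low_event (L U x : R) (s : nat -> bool) (k : nat) : bool :=
  [exists l : 'I_k.+1, (tau L U x s k == l) && (x + Spart s l <= L)].

Definition up_event (L U x : R) (s : nat -> bool) (k : nat) : bool :=
  [exists l : 'I_k.+1, (tau L U x s k == l) && (U <= x + Spart s l)].

(* The events for index k depend only on xi_1..xi_k; we extend a finite
   outcome w (w i = xi_{i+1}) arbitrarily beyond k. *)
Definition ext (k : nat) (w : {ffun 'I_k -> bool}) : nat -> bool :=
  fun i => if insub i is Some j then w j else false.

Definition weight (p : R) (k : nat) (w : {ffun 'I_k -> bool}) : R :=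
  \prod_(i < k) (if w i then p else 1 - p).

Definition prob_k (p : R) (k : nat) (E : (nat -> bool) -> bool) : R :=
  \sum_(w : {ffun 'I_k -> bool}) weight p w * (E (ext w))%:R.

Definition alpha (p L U x : R) (k : nat) : R := prob_k p k (fun s => low_event L U x s k).
Definition beta  (p L U x : R) (k : nat) : R := prob_k p k (fun s => up_event L U x s k).

End Walk.

(* Main.v *)
Require Import Defs.
From HB Require Import structures.
From mathcomp Require Import all_boot all_order all_algebra.
From mathcomp Require Import all_classical all_reals topology normedtype sequences.
From mathcomp Require Import lra.
Import Order.TTheory GRing.Theory Num.Theory numFieldNormedType.Exports.
Local Open Scope ring_scope.
Set Implicit Arguments. Unset Strict Implicit. Unset Printing Implicit Defensive.

Section Prob.
Variable R : realType.
Variable p : R.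
Hypothesis p0 : 0 <= p.
Hypothesis p1 : p <= 1.

Definition meas k (E : (nat -> bool) -> bool) :=
  forall s t, (forall i, (i < k)%N -> s i = t i) -> E s = E t.

Lemma ext_lt k (w : {ffun 'I_k -> bool}) i (Hi : (i < k)%N) : ext w i = w (Ordinal Hi).
Proof. by rewrite /ext insubT. Qed.

Lemma weight_ge0 k (w : {ffun 'I_k -> bool}) : 0 <= weight p w.
Proof. by apply: prodr_ge0 => i _; case: (w i); rewrite ?subr_ge0. Qed.

Lemma sum_weight k : \sum_(w : {ffun 'I_k -> bool}) weight p w = 1.
Proof.
rewrite /weight -(bigA_distr_bigA (fun (i : 'I_k) (b : bool) => if b then p else 1 - p)) /=.
by apply: big1 => i _; rewrite big_bool /= addrC subrK.
Qed.

Lemma eq_prob k (E F : (nat -> bool) -> bool) : (forall s, E s = F s) ->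
  prob_k p k E = prob_k p k F.
Proof. by move=> h; apply: eq_bigr => w _; rewrite h. Qed.

Lemma prob_true k : prob_k p k (fun _ => true) = 1.
Proof. by rewrite /prob_k -[RHS](sum_weight k); apply: eq_bigr => w _; rewrite mulr1. Qed.

Lemma prob_ge0 k E : 0 <= prob_k p k E.
Proof. by apply: sumr_ge0 => w _; rewrite mulr_ge0 ?weight_ge0. Qed.

Lemma prob_le k (E F : (nat -> bool) -> bool) : (forall s, E s -> F s) ->
  prob_k p k E <= prob_k p k F.
Proof.
move=> h; apply: ler_sum => w _; apply: ler_wpM2l; first exact: weight_ge0.
by case: (boolP (E (ext w))) => [/h -> | _] //; rewrite ler_nat.
Qed.

Lemma prob_le1 k E : prob_k p k E <= 1.
Proof. by rewrite -(prob_true k); apply: prob_le. Qed.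

Lemma prob_or k (E F : (nat -> bool) -> bool) : (forall s, ~~ (E s && F s)) ->
  prob_k p k (fun s => E s || F s) = prob_k p k E + prob_k p k F.
Proof.
move=> hEF; rewrite /prob_k -big_split /=; apply: eq_bigr => w _.
rewrite -mulrDr; congr (_ * _); move: (hEF (ext w)).
by case: (E (ext w)); case: (F (ext w)) => //= _; rewrite ?addr0 ?add0r.
Qed.

Lemma prob_not k E : prob_k p k (fun s => ~~ E s) = 1 - prob_k p k E.
Proof.
apply/eqP; rewrite eq_sym subr_eq -(prob_true k) addrC -prob_or.
  by apply/eqP/eq_prob => s; case: (E s).
by move=> s; case: (E s).
Qed.

Definition join k m (gh : {ffun 'I_k -> bool} * {ffun 'I_m -> bool}) : {ffun 'I_(k + m) -> bool} :=
  [ffun i : 'I_(k + m) => match fintype.split i with inl a => gh.1 a | inr b => gh.2 b end].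
Definition unjoin k m (f : {ffun 'I_(k + m) -> bool}) : {ffun 'I_k -> bool} * {ffun 'I_m -> bool} :=
  ([ffun a => f (lshift m a)], [ffun b => f (rshift k b)]).

Lemma split_l k m (a : 'I_k) : fintype.split (lshift m a) = inl a.
Proof. exact: (unsplitK (inl _ a)). Qed.
Lemma split_r k m (b : 'I_m) : fintype.split (rshift k b) = inr b.
Proof. exact: (unsplitK (inr _ b)). Qed.

Lemma joinK k m : cancel (@join k m) (@unjoin k m).
Proof.
case=> g h; rewrite /unjoin /join; congr pair; apply/ffunP => i; rewrite !ffunE.
  by rewrite split_l. by rewrite split_r.
Qed.
Lemma unjoinK k m : cancel (@unjoin k m) (@join k m).
Proof.
move=> f; apply/ffunP => i; rewrite /join /unjoin ffunE.
by case: split_ordP => j ->; rewrite ffunE.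
Qed.

Lemma prob_prod k m (A B : (nat -> bool) -> bool) : meas k A -> meas m B ->
  prob_k p (k + m) (fun s => A s && B (fun i => s (k + i)%N)) = prob_k p k A * prob_k p m B.
Proof.
move=> mA mB; rewrite /prob_k.
rewrite (reindex (@join k m)); last by exists (@unjoin k m) => x _; [exact: joinK | exact: unjoinK].
rewrite [RHS]big_distrl /=.
rewrite [RHS](eq_bigr _ (fun g _ => big_distrr _ _ _)) /= [RHS]pair_bigA /=.
apply: eq_bigr => -[g h] _ /=.
have -> : weight p (join (g, h)) = weight p g * weight p h.
  by rewrite /weight big_split_ord /=; congr (_ * _); apply: eq_bigr => i _;
     rewrite /join ffunE ?split_l ?split_r.
have -> : A (ext (join (g, h))) = A (ext g).
  apply: mA => i Hi; rewrite ext_lt ?(leq_trans Hi (leq_addr _ _)) // => H1.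
  rewrite (ext_lt _ Hi) /join ffunE.
  have -> : Ordinal H1 = lshift m (Ordinal Hi) by apply: val_inj.
  by rewrite split_l.
have -> : B (fun i => ext (join (g, h)) (k + i)%N) = B (ext h).
  apply: mB => i Hi; rewrite ext_lt ?ltn_add2l // => H1.
  rewrite (ext_lt _ Hi) /join ffunE.
  have -> : Ordinal H1 = rshift k (Ordinal Hi) by apply: val_inj.
  by rewrite split_r.
by case: (A _); case: (B _); rewrite /= ?mulr1n ?mulr0n ?mulr1 ?mulr0 ?mul0r // mulrACA.
Qed.

Lemma prob_cons k m A : meas k A -> prob_k p (k + m) A = prob_k p k A.
Proof.
move=> mA; rewrite -[RHS]mulr1 -(prob_true m) -prob_prod //.
by apply: eq_prob => s; rewrite andbT.
Qed.

Lemma prob_allones m : prob_k p m (fun t => [forall i : 'I_m, t i]) = p ^+ m.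
Proof.
rewrite /prob_k (bigD1 [ffun=> true]) //= big1 ?addr0.
  have -> : [forall i : 'I_m, ext ([ffun=> true] : {ffun 'I_m -> bool}) i].
    by apply/fintype.forallP => i; rewrite (ext_lt _ (ltn_ord i)) ffunE.
  by rewrite mulr1 /weight (eq_bigr (fun _ => p)) ?prodr_const ?card_ord // => i _; rewrite ffunE.
move=> w wne; case: (boolP [forall i : 'I_m, ext w i]) => [/fintype.forallP H|]; last by rewrite mulr0.
case/eqP: wne; apply/ffunP => i; rewrite ffunE; move: (H i).
rewrite (ext_lt _ (ltn_ord i)); have -> : Ordinal (ltn_ord i) = i by apply: val_inj. by []. Qed.

End Prob.
Section Walk2.
Variable R : realType.
Variables L U x : R.
Hypothesis hLU : L < U.

Definition NE k (s : nat -> bool) := ~~ [exists l : 'I_k.+1, exited L U x s l].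

Lemma Spart_eq k s t : (forall i, (i < k)%N -> s i = t i) ->
  forall l, (l <= k)%N -> Spart R s l = Spart R t l.
Proof.
move=> h l lk; rewrite /Spart; apply: eq_big_nat => i /andP [i1 il].
have h1 : (i.-1 < k)%N by rewrite (leq_trans _ lk) // -ltnS prednK // (leq_trans i1).
have h2 : (i.-2 < k)%N by apply: leq_ltn_trans h1; exact: leq_pred.
by rewrite /Xstep (h _ h1) (h _ h2).
Qed.

Lemma exited_eq k s t : (forall i, (i < k)%N -> s i = t i) ->
  forall l, (l <= k)%N -> exited L U x s l = exited L U x t l.
Proof. by move=> h l lk; rewrite /exited (Spart_eq h lk). Qed.

Lemma tau_eq k s t : (forall i, (i < k)%N -> s i = t i) -> tau L U x s k = tau L U x t k.
Proof.
move=> h; rewrite /tau; congr minn; apply: eq_in_find => l.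
by rewrite mem_iota add0n ltnS => /andP [_ lk]; exact: (exited_eq h lk).
Qed.

Lemma low_meas k : meas k (fun s => low_event L U x s k).
Proof.
move=> s t h; rewrite /low_event; apply: eq_existsb => l.
by rewrite (tau_eq h) (Spart_eq h) // -ltnS.
Qed.
Lemma up_meas k : meas k (fun s => up_event L U x s k).
Proof.
move=> s t h; rewrite /up_event; apply: eq_existsb => l.
by rewrite (tau_eq h) (Spart_eq h) // -ltnS.
Qed.
Lemma NE_meas k : meas k (NE k).
Proof.
move=> s t h; rewrite /NE; congr negb; apply: eq_existsb => l.
by rewrite (exited_eq h) // -ltnS.
Qed.

Lemma tauP k s : [exists l : 'I_k.+1, exited L U x s l] ->
  [/\ exited L U x s (tau L U x s k), (tau L U x s k <= k)%N &
      forall k', (k <= k')%N -> tau L U x s k' = tau L U x s k].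
Proof.
move/fintype.existsP => [l hl].
have hh : has (exited L U x s) (iota 0 k.+1).
  by apply/hasP; exists (val l) => //; rewrite mem_iota add0n ltn_ord.
have hf := hh; rewrite has_find size_iota in hf.
have ht : tau L U x s k = find (exited L U x s) (iota 0 k.+1).
  by rewrite /tau; apply/minn_idPl; rewrite -ltnS.
split.
- by rewrite ht; have := nth_find 0 hh; rewrite nth_iota.
- by rewrite ht -ltnS.
- move=> k' kk'; rewrite ht /tau -(subnKC kk') -addSn iotaD find_cat hh.
  by apply/minn_idPl; rewrite -ltnS (leq_trans hf) // ltnS leq_addr.
Qed.

Lemma low_exit k s : low_event L U x s k -> [exists l : 'I_k.+1, exited L U x s l].
Proof.
move/fintype.existsP => [l /andP [_ hl]]; apply/fintype.existsP; exists l.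
by rewrite /exited hl.
Qed.
Lemma up_exit k s : up_event L U x s k -> [exists l : 'I_k.+1, exited L U x s l].
Proof.
move/fintype.existsP => [l /andP [_ hl]]; apply/fintype.existsP; exists l.
by rewrite /exited hl orbT.
Qed.

Lemma has_exit k s : (low_event L U x s k || up_event L U x s k) = ~~ NE k s.
Proof.
rewrite /NE negbK; apply/idP/idP.
  by case/orP; [apply: low_exit | apply: up_exit].
move=> /tauP [he hk _].
case/orP: he => hc; [apply/orP; left | apply/orP; right];
  apply/fintype.existsP; exists (Ordinal (hk : (tau L U x s k < k.+1)%N)); by rewrite /= eqxx.
Qed.

Lemma low_up_disj k s : ~~ (low_event L U x s k && up_event L U x s k).
Proof.
apply/negP => /andP [/fintype.existsP [l1 /andP [/eqP e1 h1]] /fintype.existsP [l2 /andP [/eqP e2 h2]]].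
have e : (l1 : nat) = l2 by rewrite -e1 -e2.
rewrite e in h1.
by have := le_trans h2 h1; rewrite leNgt hLU.
Qed.

Lemma low_mono k s : low_event L U x s k -> low_event L U x s k.+1.
Proof.
move=> hl; have /tauP [_ _ ht] := low_exit hl.
move: hl => /fintype.existsP [l /andP [/eqP e h]]; apply/fintype.existsP.
by exists (widen_ord (leqnSn _) l) => /=; rewrite h andbT ht // e eqxx.
Qed.
Lemma up_mono k s : up_event L U x s k -> up_event L U x s k.+1.
Proof.
move=> hl; have /tauP [_ _ ht] := up_exit hl.
move: hl => /fintype.existsP [l /andP [/eqP e h]]; apply/fintype.existsP.
by exists (widen_ord (leqnSn _) l) => /=; rewrite h andbT ht // e eqxx.
Qed.

Lemma NE_mono k s : NE k.+1 s -> NE k s.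
Proof.
rewrite /NE; apply: contra => /fintype.existsP [l hl]; apply/fintype.existsP.
by exists (widen_ord (leqnSn _) l).
Qed.

Lemma Spart_succ (s : nat -> bool) n : Spart R s n.+1 = Spart R s n + Xstep R s n.+1.
Proof. by rewrite /Spart big_nat_recr. Qed.

Lemma Xstep_ge1 (s : nat -> bool) n : s n -> 1 <= Xstep R s n.+1 :> R.
Proof. by move=> h; rewrite /Xstep /= h /=; case: ifP => _ //; rewrite ler1n. Qed.

Lemma run_ge (s : nat -> bool) a m : (forall i, (i < m)%N -> s (a + i)%N) ->
  Spart R s a + m%:R <= Spart R s (a + m) :> R.
Proof.
elim: m => [|m IH] h; first by rewrite addn0 addr0.
rewrite addnS Spart_succ mulrSr addrA lerD //.
  by apply: IH => i im; apply: h; rewrite ltnS ltnW.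
by apply: Xstep_ge1; apply: h.
Qed.

Lemma NE_bound a m (s : nat -> bool) : U - L <= m%:R -> NE (a + m) s ->
  NE a s && ~~ [forall i : 'I_m, s (a + i)%N].
Proof.
move=> hm hne; apply/andP; split.
  move: hne; rewrite /NE; apply: contra => /fintype.existsP [l hl]; apply/fintype.existsP.
  by exists (widen_ord (leq_addr _ _ : (a.+1 <= (a + m).+1)%N) l).
apply/negP => /fintype.forallP hall.
have hr : Spart R s a + m%:R <= Spart R s (a + m) :> R.
  by apply: run_ge => i im; exact: (hall (Ordinal im)).
have na : ~~ exited L U x s a.
  apply/negP => ea; move/negP: hne; apply; apply/fintype.existsP.
  by exists (Ordinal (leq_addr _ _ : (a < (a + m).+1)%N)).
have eam : exited L U x s (a + m).
  move: na; rewrite /exited negb_or -!ltNge => /andP [h1 _].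
  apply/orP; right.
  lra.
move/negP: hne; apply; apply/fintype.existsP.
by exists (Ordinal (ltnSn (a + m))).
Qed.

End Walk2.

Local Open Scope classical_set_scope.

Theorem corollary2p5 (R : realType) (p L U : R) :
  0 < p < 1 -> L < U ->
  forall x : R, L <= x <= U ->
  exists a b : R,
    [/\ 0 <= a <= 1, 0 <= b <= 1,
        alpha p L U x n @[n --> \oo] --> a,
        beta p L U x n @[n --> \oo] --> b
      & a + b = 1].
Proof.
move=> /andP [p0 p1] hLU x _.
have p0' : 0 <= p by exact: ltW.
have p1' : p <= 1 by exact: ltW.
pose P k := prob_k p k (NE L U x k).
have hab : forall k, alpha p L U x k + beta p L U x k = 1 - P k.
  move=> k; rewrite /alpha /beta -prob_or; last by move=> s; exact: (low_up_disj _ hLU).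
  by rewrite /P -prob_not; apply: eq_prob => s; rewrite has_exit.
have cons1 : forall k E, meas k E -> prob_k p k.+1 E = prob_k p k E.
  by move=> k E mE; rewrite -addn1 prob_cons.
have alpha_nd : nondecreasing_seq (alpha p L U x).
  apply/nondecreasing_seqP => k; rewrite /alpha -cons1; last exact: low_meas.
  by apply: (prob_le p0' p1') => s; apply: low_mono.
have P_ni : nonincreasing_seq P.
  apply/nonincreasing_seqP => k; rewrite /P -[X in _ <= X]cons1; last exact: NE_meas.
  by apply: (prob_le p0' p1') => s; apply: NE_mono.
pose m := (Num.bound (U - L)).
have hm : U - L <= m%:R by apply/ltW/archi_boundP; rewrite subr_ge0 ltW.
pose q := 1 - p ^+ m.
have q0 : 0 <= q by rewrite subr_ge0 exprn_ile1.
have q1 : q < 1 by rewrite ltrBlDr ltrDl exprn_gt0.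
have Pstep : forall a, P (a + m)%N <= P a * q.
  move=> a.
  have mB : meas m (fun t => ~~ [forall i : 'I_m, t i]).
    move=> s t h /=; congr negb; apply: eq_forallb => i; by rewrite h.
  have e := prob_prod p (@NE_meas _ L U x a) mB.
  rewrite prob_not prob_allones in e.
  rewrite /P /q -e; apply: (prob_le p0' p1') => s /=; exact: NE_bound.
have Pgeo : forall j, P (j * m)%N <= q ^+ j.
  elim => [|j IH]; first by rewrite mul0n expr0 /P (prob_le1 p0' p1').
  rewrite mulSnr exprSr (le_trans (Pstep _)) //.
  by rewrite ler_wpM2r.
have Pcvg : cvgn P.
  apply: nonincreasing_is_cvgn => //; exists 0 => _ [n _ <-]; exact: (prob_ge0 p0' p1').
have P0 : limn P = 0.
  apply/eqP; rewrite eq_le; apply/andP; split; last first.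
    by apply: limr_ge => //; near=> n; exact: (prob_ge0 p0' p1').
  have qc : (GRing.exp q : R ^nat) @ \oo --> 0 by apply: cvg_expr; rewrite ger0_norm.
  rewrite -(cvg_lim _ qc) //; apply: limr_ge; first exact: cvgP qc.
  near=> j; apply: le_trans (Pgeo j); exact: nonincreasing_cvgn_ge.
have PP : P @ \oo --> 0 by rewrite -P0.
have acvg : cvgn (alpha p L U x).
  apply: nondecreasing_is_cvgn => //; exists 1 => _ [n _ <-]; exact: (prob_le1 p0' p1').
set a := limn (alpha p L U x).
have a0 : 0 <= a by apply: limr_ge => //; near=> n; exact: (prob_ge0 p0' p1').
have a1 : a <= 1 by apply: limr_le => //; near=> n; exact: (prob_le1 p0' p1').
exists a, (1 - a); split.
- by rewrite a0 a1.
- by rewrite subr_ge0 a1 /= lerBlDr lerDl.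
- exact: acvg.
- have -> : beta p L U x = fun k => 1 - P k - alpha p L U x k.
    by apply: funext => k; rewrite -hab addrAC subrr add0r.
  have -> : 1 - a = (1 - 0) - a by rewrite subr0.
  apply: cvgB; [apply: cvgB; [exact: cvg_cst | exact: PP] | exact: acvg].
- by rewrite addrC subrK.
Unshelve. all: by end_near.
Qed.
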